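(* For $n\in\{0,1,2,\dots\}$ define \[ b_n=\frac14\frac{(-1)^n}{n!}\sum_{k=0}^{n}(-1)^kS(n,k)(2k-1)!!, \] \[ c_n=\frac{(-1)^{n+1}}{n!}\sum_{k=1}^{n}(-1)^kS(n,k)\frac{k!}{2^k}\sum_{\ell=1}^{k}(-1)^{\ell}\binom{2k-\ell}{k}\frac{2^{\ell/2}}{\ell}\sin\frac{3\ell\pi}{4}. \] Then, with principal branches of the square root and of $\arctan$, for $|x|<\ln 2$, \[ \frac{1}{4\sqrt{2e^{-x}-1}}=\sum_{n=0}^{\infty}b_nx^n \qquad\text{and}\qquad \frac{\frac{\pi}{4}-\arctan\sqrt{2e^{-x}-1}}{\sqrt{2e^{-x}-1}}=\sum_{n=0}^{\infty}c_nx^n . \]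
   Context: $S(n,k)$ are the Stirling numbers of the second kind, given by $\frac{(e^x-1)^k}{k!}=\sum_{n\ge k}S(n,k)\frac{x^n}{n!}$. $(2k-1)!!=1\cdot3\cdots(2k-1)$ for $k\ge1$, and $(-1)!!=1$. An empty sum is $0$. *)

(* Defs.v *)
From Stdlib Require Import Reals Lra Factorial.
From Coquelicot Require Import Coquelicot.
Open Scope R_scope.

Fixpoint stirling2 (n k : nat) : nat :=
  match n, k with
  | O, O => 1
  | O, S _ => 0
  | S _, O => 0
  | S n', S k' => (S k' * stirling2 n' (S k') + stirling2 n' k')%nat
  end.

(* oddfact k = (2k-1)!! = 1*3*...*(2k-1), with oddfact 0 = (-1)!! = 1 *)
Fixpoint oddfact (k : nat) : nat :=
  match k with
  | O => 1
  | S k' => ((2 * k' + 1) * oddfact k')%nat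
  end.

Definition binR (n k : nat) : R := Stdlib.Reals.Binomial.C n k.

(* sum_n_m f a b = f a + ... + f b (empty, i.e. 0, if b < a) *)
Definition b_coef (n : nat) : R :=
  / 4 * (-1) ^ n / INR (Factorial.fact n) *
  sum_n_m (fun k => (-1) ^ k * INR (stirling2 n k) * INR (oddfact k)) 0 n.

Definition c_coef (n : nat) : R :=
  (-1) ^ (n + 1) / INR (Factorial.fact n) *
  sum_n_m (fun k => (-1) ^ k * INR (stirling2 n k) * INR (Factorial.fact k) / 2 ^ k *
     sum_n_m (fun l => (-1) ^ l * binR (2 * k - l) k * Rpower 2 (INR l / 2) / INR l
                         * sin (3 * INR l * PI / 4)) 1 k) 1 n.

(* Main.v *)
Require Import Defs.
From Stdlib Require Import Reals Lra Lia Factorial.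
From Coquelicot Require Import Coquelicot.
Open Scope R_scope.

Definition Dr (A : nat -> R) (n : nat) : R := INR (S n) * A (S n).
Definition delta (n : nat) : R := match n with O => 1 | _ => 0 end.
Definition E (n : nat) : R := (-1) ^ n / INR (fact n).
Definition Ex (n : nat) : R := / INR (fact n).
Definition U (n : nat) : R := match n with O => 0 | _ => E n end.

Lemma sum_shift (f : nat -> R) n :
  sum_f_R0 f (S n) = f 0%nat + sum_f_R0 (fun i => f (S i)) n.
Proof. rewrite decomp_sum; [reflexivity | lia]. Qed.

Lemma conv_D A B n : Dr (PS_mult A B) n = PS_mult (Dr A) B n + PS_mult A (Dr B) n.
Proof.
  unfold Dr, PS_mult.
  transitivity (sum_f_R0 (fun k => INR k * (A k * B (S n - k)%nat)) (S n)
              + sum_f_R0 (fun k => INR (S n - k) * (A k * B (S n - k)%nat)) (S n)).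
  - rewrite <- plus_sum, scal_sum. apply sum_eq. intros i Hi.
    rewrite <- Rmult_plus_distr_r, <- plus_INR.
    replace (i + (S n - i))%nat with (S n) by lia. ring.
  - f_equal.
    + rewrite sum_shift. simpl INR at 1. rewrite Rmult_0_l, Rplus_0_l.
      apply sum_eq. intros i Hi. replace (S n - S i)%nat with (n - i)%nat by lia. ring.
    + rewrite tech5. replace (S n - S n)%nat with 0%nat by lia. simpl INR at 2.
      rewrite Rmult_0_l, Rplus_0_r. apply sum_eq. intros i Hi.
      replace (S n - i)%nat with (S (n - i)) by lia. ring.
Qed.

Lemma conv_plus_r A B C n :
  PS_mult A (fun m => B m + C m) n = PS_mult A B n + PS_mult A C n.
Proof. unfold PS_mult. rewrite <- plus_sum. apply sum_eq. intros; ring. Qed.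

Lemma conv_scal_r A B c n :
  PS_mult A (fun m => c * B m) n = c * PS_mult A B n.
Proof. unfold PS_mult. rewrite scal_sum. apply sum_eq. intros; ring. Qed.

Lemma conv_ext_r A B C n : (forall m, (m <= n)%nat -> B m = C m) ->
  PS_mult A B n = PS_mult A C n.
Proof. intros H. unfold PS_mult. apply sum_eq. intros i Hi. rewrite H by lia. ring. Qed.

Lemma conv_ext_l A B C n : (forall m, (m <= n)%nat -> B m = C m) ->
  PS_mult B A n = PS_mult C A n.
Proof. intros H. unfold PS_mult. apply sum_eq. intros i Hi. rewrite H by lia. ring. Qed.

Lemma conv_plus_l A B C n :
  PS_mult (fun m => B m + C m) A n = PS_mult B A n + PS_mult C A n.
Proof. unfold PS_mult. rewrite <- plus_sum. apply sum_eq. intros; ring. Qed.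

Lemma conv_scal_l A B c n :
  PS_mult (fun m => c * B m) A n = c * PS_mult B A n.
Proof. unfold PS_mult. rewrite scal_sum. apply sum_eq. intros; ring. Qed.

Lemma conv_delta_l B n : PS_mult delta B n = B n.
Proof.
  unfold PS_mult. destruct n.
  - simpl. ring.
  - rewrite sum_shift. simpl delta at 1. rewrite Nat.sub_0_r.
    rewrite (sum_eq _ (fun _ => 0)). 2: { intros; simpl; ring. }
    rewrite sum_cte. ring.
Qed.

Lemma conv_delta_r B n : PS_mult B delta n = B n.
Proof.
  unfold PS_mult. destruct n.
  - simpl. ring.
  - rewrite tech5. replace (S n - S n)%nat with 0%nat by lia.
    rewrite (sum_eq _ (fun _ => 0)). 2: { intros i Hi. replace (S n - i)%nat with (S (n - i)) by lia. simpl; ring. }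
    rewrite sum_cte. simpl. ring.
Qed.

Lemma fact_S_R n : INR (fact (S n)) = INR (S n) * INR (fact n).
Proof. rewrite fact_simpl, mult_INR. reflexivity. Qed.

Lemma D_E n : Dr E n = - E n.
Proof.
  unfold Dr, E. rewrite fact_S_R. simpl pow.
  field. split; [apply INR_fact_neq_0 | apply not_0_INR; lia].
Qed.

Lemma D_Ex n : Dr Ex n = Ex n.
Proof.
  unfold Dr, Ex. rewrite fact_S_R.
  field. split; [apply INR_fact_neq_0 | apply not_0_INR; lia].
Qed.

Lemma D_U n : Dr U n = - E n.
Proof. unfold Dr, U. apply D_E. Qed.

Lemma E_split n : E n = delta n + U n.
Proof. destruct n; unfold delta, U; [unfold E; simpl; field | ring]. Qed.

Lemma conv_E G n : PS_mult E G n = G n + PS_mult U G n.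
Proof.
  rewrite (conv_ext_l G E (fun m => delta m + U m)) by (intros; apply E_split).
  rewrite conv_plus_l, conv_delta_l. reflexivity.
Qed.


Lemma conv_DE G m : PS_mult (Dr E) G m = -1 * PS_mult E G m.
Proof.
  rewrite <- conv_scal_l. apply conv_ext_l. intros; rewrite D_E; ring.
Qed.

Lemma conv_Ex_E n : forall G, PS_mult Ex (PS_mult E G) n = G n.
Proof.
  induction n as [|n IH]; intros G.
  - unfold PS_mult, Ex, E. simpl. field.
  - assert (H : Dr (PS_mult Ex (PS_mult E G)) n = Dr G n).
    { rewrite conv_D.
      rewrite (conv_ext_l _ (Dr Ex) Ex) by (intros; apply D_Ex).
      rewrite (conv_ext_r _ (Dr (PS_mult E G))
                 (fun m => -1 * PS_mult E G m + PS_mult E (Dr G) m)).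
      2: { intros m _. rewrite conv_D, conv_DE. reflexivity. }
      rewrite conv_plus_r, conv_scal_r, !IH. ring. }
    unfold Dr in H. apply Rmult_eq_reg_l in H; auto. apply not_0_INR; lia.
Qed.

Definition T (k n : nat) : R := (-1) ^ n * INR (stirling2 n k) / INR (fact n).
Definition Tm (k n : nat) : R := match k with O => 0 | S j => T j n end.

Lemma stirling2_lt n : forall k, (n < k)%nat -> stirling2 n k = 0%nat.
Proof.
  induction n as [|n IH]; intros k Hk.
  - destruct k; [lia | reflexivity].
  - destruct k; [lia|]. simpl. rewrite !IH by lia. lia.
Qed.

Lemma T_lt k n : (n < k)%nat -> T k n = 0.
Proof. intros H. unfold T. rewrite stirling2_lt by exact H. simpl. field. apply INR_fact_neq_0. Qed.

Lemma T0 n : T 0 n = delta n.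
Proof. unfold T, delta. destruct n.
  - simpl. field.
  - replace (INR (stirling2 (S n) 0)) with 0 by reflexivity. field. apply INR_fact_neq_0.
Qed.

Lemma D_T k n : Dr (T k) n = - (Tm k n + INR k * T k n).
Proof.
  unfold Dr, Tm, T. rewrite fact_S_R. destruct k.
  - simpl stirling2. change (INR 0) with 0. field. split; [apply INR_fact_neq_0 | apply not_0_INR; lia].
  - change (stirling2 (S n) (S k)) with (S k * stirling2 n (S k) + stirling2 n k)%nat.
    rewrite plus_INR, mult_INR. simpl pow.
    field. split; [apply INR_fact_neq_0 | apply not_0_INR; lia].
Qed.

Lemma conv_zero_r A n : PS_mult A (fun _ => 0) n = 0.
Proof. unfold PS_mult. rewrite (sum_eq _ (fun _ => 0)) by (intros; ring). rewrite sum_cte. ring. Qed.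

Lemma conv_U_T n : forall k, PS_mult U (T k) n = INR (S k) * T (S k) n.
Proof.
  induction n as [|n IH]; intros k.
  - unfold PS_mult, U. simpl. rewrite (T_lt (S k) 0) by lia. ring.
  - assert (HTm : PS_mult U (Tm k) n = INR k * T k n).
    { destruct k.
      + change (Tm 0) with (fun _ : nat => 0). rewrite conv_zero_r. simpl. ring.
      + change (Tm (S k)) with (T k). rewrite IH. reflexivity. }
    assert (H : Dr (PS_mult U (T k)) n = Dr (fun m => INR (S k) * T (S k) m) n).
    { rewrite conv_D.
      rewrite (conv_ext_l _ (Dr U) (fun m => -1 * E m)) by (intros; rewrite D_U; ring).
      rewrite conv_scal_l, conv_E, IH.
      rewrite (conv_ext_r _ (Dr (T k)) (fun m => -1 * Tm k m + (- INR k) * T k m))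
        by (intros; rewrite D_T; ring).
      rewrite conv_plus_r, !conv_scal_r, HTm, IH.
      transitivity (INR (S k) * Dr (T (S k)) n); [| unfold Dr; ring].
      rewrite D_T. change (Tm (S k) n) with (T k n). rewrite S_INR. ring. }
    unfold Dr in H. apply Rmult_eq_reg_l in H; auto. apply not_0_INR; lia.
Qed.

Lemma conv_U_Tm k n : PS_mult U (Tm k) n = INR k * T k n.
Proof.
  destruct k.
  + change (Tm 0) with (fun _ : nat => 0). rewrite conv_zero_r. simpl. ring.
  + change (Tm (S k)) with (T k). rewrite conv_U_T. reflexivity.
Qed.

Definition Lop (G : nat -> R) (n : nat) : R :=
  2 * PS_mult E (Dr G) n - Dr G n - PS_mult E G n.

Lemma Lop_ext_le G H n : (forall m, (m <= S n)%nat -> G m = H m) -> Lop G n = Lop H n.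
Proof.
  intros HGH. unfold Lop.
  rewrite (conv_ext_r E (Dr G) (Dr H)) by (intros m Hm; unfold Dr; rewrite HGH by lia; ring).
  rewrite (conv_ext_r E G H) by (intros m Hm; apply HGH; lia).
  unfold Dr. rewrite HGH by lia. ring.
Qed.

Lemma Lop_lin G H c n : Lop (fun m => G m + c * H m) n = Lop G n + c * Lop H n.
Proof.
  unfold Lop.
  rewrite (conv_ext_r E (Dr (fun m => G m + c * H m)) (fun m => Dr G m + c * Dr H m))
    by (intros; unfold Dr; ring).
  rewrite !conv_plus_r, !conv_scal_r. unfold Dr. ring.
Qed.

Lemma Lop_scal H c n : Lop (fun m => c * H m) n = c * Lop H n.
Proof.
  rewrite (Lop_ext_le _ (fun m => 0 + c * H m)) by (intros; ring).
  rewrite Lop_lin.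
  assert (Lop (fun _ => 0) n = 0).
  { unfold Lop. rewrite (conv_ext_r E (Dr (fun _ => 0)) (fun _ => 0)) by (intros; unfold Dr; ring).
    rewrite !conv_zero_r. unfold Dr. ring. }
  rewrite H0. ring.
Qed.

Lemma Lop_T k n :
  Lop (T k) n = - Tm k n - (3 * INR k + 1) * T k n - (INR k + 1) * (2 * INR k + 1) * T (S k) n.
Proof.
  unfold Lop. rewrite !conv_E.
  rewrite (conv_ext_r U (Dr (T k)) (fun m => -1 * Tm k m + (- INR k) * T k m))
    by (intros; rewrite D_T; ring).
  rewrite conv_plus_r, !conv_scal_r, conv_U_Tm, conv_U_T, D_T.
  rewrite S_INR. ring.
Qed.

Section Main.
Variable alpha : nat -> R.
Variable kappa : R.
Hypothesis Hrec : forall k, alpha (S k) + (2 * INR k + 1) * alpha k = - kappa * (-1) ^ k * INR (fact k).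

Definition FM (M n : nat) : R := sum_f_R0 (fun k => alpha k * T k n) M.
Definition Fc (n : nat) : R := FM n n.

Lemma rec2 j : alpha (S (S j)) + (3 * INR (S j) + 1) * alpha (S j)
               + (INR (S j)) * (2 * INR j + 1) * alpha j = 0.
Proof.
  pose proof (Hrec (S j)) as H1. pose proof (Hrec j) as H2.
  rewrite fact_S_R in H1. simpl pow in H1. rewrite S_INR in *.
  replace (alpha (S (S j))) with (- kappa * (-1 * (-1) ^ j) * ((INR j + 1) * INR (fact j))
            - (2 * (INR j + 1) + 1) * alpha (S j)) by lra.
  replace (alpha (S j)) with (- kappa * (-1) ^ j * INR (fact j) - (2 * INR j + 1) * alpha j) by lra.
  ring.
Qed.

Lemma Lop_FM M n : Lop (FM M) n = sum_f_R0 (fun k => alpha k * Lop (T k) n) M.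
Proof.
  induction M as [|M IH].
  - unfold FM. simpl. apply Lop_scal.
  - simpl sum_f_R0. rewrite <- IH.
    rewrite (Lop_ext_le (FM (S M)) (fun m => FM M m + alpha (S M) * T (S M) m)) by (intros; reflexivity).
    apply Lop_lin.
Qed.

Lemma Psi M n : sum_f_R0 (fun k => alpha k * Lop (T k) n) M - kappa * T 0 n
  = alpha (S M) * T M n - alpha M * (INR M + 1) * (2 * INR M + 1) * T (S M) n.
Proof.
  induction M as [|M IH].
  - simpl sum_f_R0. rewrite Lop_T. simpl Tm. pose proof (Hrec 0) as H0.
    simpl in H0. simpl INR. replace (alpha 1%nat) with (- kappa - alpha 0%nat) by lra. ring.
  - rewrite tech5.
    replace (sum_f_R0 (fun k => alpha k * Lop (T k) n) M + alpha (S M) * Lop (T (S M)) n - kappa * T 0%nat n)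
      with ((sum_f_R0 (fun k => alpha k * Lop (T k) n) M - kappa * T 0%nat n) + alpha (S M) * Lop (T (S M)) n) by ring.
    rewrite IH, Lop_T. change (Tm (S M) n) with (T M n).
    pose proof (rec2 M) as R2.
    replace (alpha (S (S M))) with (- (3 * INR (S M) + 1) * alpha (S M) - INR (S M) * (2 * INR M + 1) * alpha M) by lra.
    rewrite !S_INR. ring.
Qed.

Lemma FM_stable M m : (m <= M)%nat -> FM M m = Fc m.
Proof.
  induction M as [|M IH]; intros Hm.
  - replace m with 0%nat by lia. reflexivity.
  - destruct (Nat.eq_dec m (S M)) as [->|Hne]; [reflexivity|].
    unfold FM. simpl sum_f_R0. fold (FM M m). rewrite IH by lia.
    rewrite T_lt by lia. ring.
Qed.

Lemma Eform n : Lop Fc n = kappa * delta n.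
Proof.
  rewrite (Lop_ext_le Fc (FM (S n))) by (intros; symmetry; apply FM_stable; lia).
  rewrite Lop_FM.
  pose proof (Psi (S n) n) as HP. rewrite T0 in HP.
  rewrite (T_lt (S n) n), (T_lt (S (S n)) n) in HP by lia. lra.
Qed.

Lemma Exform n : 2 * Dr Fc n - PS_mult Ex (Dr Fc) n = Fc n + kappa * Ex n.
Proof.
  pose proof (conv_Ex_E n (fun m => 2 * Dr Fc m + (-1) * Fc m)) as H.
  rewrite (conv_ext_r Ex _ (fun m => Dr Fc m + kappa * delta m)) in H.
  2: { intros m _. rewrite conv_plus_r, !conv_scal_r. pose proof (Eform m) as HE.
       unfold Lop in HE. lra. }
  rewrite conv_plus_r, conv_scal_r, conv_delta_r in H. lra.
Qed.

End Main.

Lemma Ex_pos n : 0 < Ex n.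
Proof. unfold Ex. apply Rinv_0_lt_compat. apply lt_0_INR, lt_O_fact. Qed.

Lemma Ex_le1 n : Ex n <= 1.
Proof.
  unfold Ex. rewrite <- Rinv_1. apply Rinv_le_contravar; [lra|].
  change 1 with (INR 1). apply le_INR. pose proof (lt_O_fact n). lia.
Qed.

Lemma exp_partial r (Hr : 0 <= r) n : sum_f_R0 (fun i => Ex i * r ^ i) n <= exp r.
Proof.
  unfold exp. destruct (exist_exp r) as [l Hl]. simpl.
  apply (growing_ineq (fun n => sum_f_R0 (fun i => Ex i * r ^ i) n)).
  - intros m. rewrite tech5. assert (0 <= Ex (S m) * r ^ S m).
    { apply Rmult_le_pos; [left; apply Ex_pos | apply pow_le; exact Hr]. } lra.
  - exact Hl.
Qed.

Lemma pow_split r a b : r ^ (S a + S b) = r ^ (S a) * r ^ (S b).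
Proof. apply pow_add. Qed.

Section Bound.
Variable F : nat -> R.
Variable kappa rho : R.
Hypothesis Hrho : 0 < rho.
Hypothesis Hrho1 : rho <= 1.
Hypothesis Hexp : exp rho < 2.
Hypothesis HF : forall n, 2 * Dr F n - PS_mult Ex (Dr F) n = F n + kappa * Ex n.

Let G n := Rabs (F n) * rho ^ n.

Lemma step_eq n' : Dr F (S n') =
  sum_f_R0 (fun i => Ex (S i) * Dr F (n' - i)%nat) n' + F (S n') + kappa * Ex (S n').
Proof.
  pose proof (HF (S n')) as H. unfold PS_mult in H. rewrite sum_shift in H.
  simpl (S n' - 0)%nat in H. unfold Ex at 1 in H. simpl fact in H.
  change (fun i => Ex (S i) * Dr F (S n' - S i)%nat) with (fun i => Ex (S i) * Dr F (n' - i)%nat) in H.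
  replace (/ INR 1) with 1 in H by (simpl; field). lra.
Qed.

Lemma step_bound K (HK : Rabs kappa <= K) n' (IH : forall m, (m <= S n')%nat -> G m <= K) :
  INR (S (S n')) * G (S (S n')) <= INR (S (S n')) * K * (exp rho - 1) + 2 * K.
Proof.
  assert (HK0 : 0 <= K) by (pose proof (Rabs_pos kappa); lra).
  assert (HG : INR (S (S n')) * G (S (S n')) = Rabs (Dr F (S n')) * rho ^ (S (S n'))).
  { unfold G, Dr. rewrite Rabs_mult, (Rabs_pos_eq (INR _)) by apply pos_INR. ring. }
  rewrite HG, step_eq.
  set (S1 := sum_f_R0 (fun i => Ex (S i) * Dr F (n' - i)%nat) n').
  assert (HS1 : Rabs S1 * rho ^ (S (S n')) <= INR (S (S n')) * K * (exp rho - 1)).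
  { unfold S1. eapply Rle_trans.
    { apply Rmult_le_compat_r; [apply pow_le; lra | apply sum_f_R0_triangle]. }
    rewrite Rmult_comm, scal_sum.
    apply Rle_trans with (sum_f_R0 (fun i => INR (S (S n')) * K * (Ex (S i) * rho ^ S i)) n').
    { apply sum_Rle. intros i Hi.
      replace (S (S n')) with (S (n' - i) + S i)%nat at 1 by lia.
      rewrite pow_add. unfold Dr. rewrite !Rabs_mult, (Rabs_pos_eq (Ex _)) by (left; apply Ex_pos).
      rewrite (Rabs_pos_eq (INR _)) by apply pos_INR.
      specialize (IH (S (n' - i)) ltac:(lia)). unfold G in IH.
      assert (Hle : INR (S (n' - i)) <= INR (S (S n'))) by (apply le_INR; lia).
      assert (0 <= Ex (S i) * rho ^ S i) by (apply Rmult_le_pos; [left; apply Ex_pos| apply pow_le; lra]).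
      replace (Ex (S i) * (INR (S (n' - i)) * Rabs (F (S (n' - i)))) * (rho ^ S (n' - i) * rho ^ S i))
        with (INR (S (n' - i)) * (Rabs (F (S (n' - i))) * rho ^ S (n' - i)) * (Ex (S i) * rho ^ S i)) by ring.
      apply Rmult_le_compat_r; [assumption|].
      apply Rmult_le_compat; [apply pos_INR | apply Rmult_le_pos; [apply Rabs_pos | apply pow_le; lra] | exact Hle | exact IH]. }
    rewrite (sum_eq _ (fun i => (Ex (S i) * rho ^ S i) * (INR (S (S n')) * K))) by (intros; ring).
    rewrite <- scal_sum. apply Rmult_le_compat_l.
    { apply Rmult_le_pos; [apply pos_INR | exact HK0]. }
    pose proof (exp_partial rho ltac:(lra) (S n')) as HE. rewrite sum_shift in HE.
    replace (Ex 0 * rho ^ 0) with 1 in HE by (unfold Ex; simpl; field). lra. }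
  assert (H2 : Rabs (F (S n')) * rho ^ S (S n') <= K).
  { specialize (IH (S n') ltac:(lia)). unfold G in IH.
    change (rho ^ S (S n')) with (rho * rho ^ S n').
    assert (0 <= Rabs (F (S n')) * rho ^ S n') by (apply Rmult_le_pos; [apply Rabs_pos| apply pow_le; lra]).
    nra. }
  assert (H3 : Rabs (kappa * Ex (S n')) * rho ^ S (S n') <= K).
  { rewrite Rabs_mult, (Rabs_pos_eq (Ex _)) by (left; apply Ex_pos).
    pose proof (Ex_le1 (S n')). pose proof (Ex_pos (S n')).
    assert (0 <= rho ^ S (S n') <= 1).
    { split; [apply pow_le; lra| rewrite <- (pow1 (S (S n'))); apply pow_incr; lra]. }
    assert (0 <= Rabs kappa) by apply Rabs_pos.
    assert (Rabs kappa * Ex (S n') <= Rabs kappa) by nra.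
    assert (0 <= Rabs kappa * Ex (S n')) by nra. nra. }
  assert (Htri : Rabs (S1 + F (S n') + kappa * Ex (S n')) <= Rabs S1 + Rabs (F (S n')) + Rabs (kappa * Ex (S n'))).
  { eapply Rle_trans; [apply Rabs_triang|]. pose proof (Rabs_triang S1 (F (S n'))). lra. }
  assert (0 <= rho ^ S (S n')) by (apply pow_le; lra).
  nra.
Qed.

Lemma coef_bound : exists K, forall n, Rabs (F n) * rho ^ n <= K.
Proof.
  destruct (INR_archimed (2 - exp rho) 2) as [N HN]; [lra|].
  set (K := Rabs kappa + sum_f_R0 G N).
  assert (HGpos : forall m, 0 <= G m) by (intros; unfold G; apply Rmult_le_pos; [apply Rabs_pos| apply pow_le; lra]).
  assert (HsumG : forall m, (m <= N)%nat -> G m <= sum_f_R0 G N).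
  { intros m Hm. clear -Hm HGpos. induction N.
    - replace m with 0%nat by lia. simpl. lra.
    - destruct (Nat.eq_dec m (S N)) as [->|Hne].
      + rewrite tech5. pose proof (cond_pos_sum G N (fun k => HGpos k)). lra.
      + rewrite tech5. specialize (IHN ltac:(lia)). specialize (HGpos (S N)). lra. }
  assert (HK : Rabs kappa <= K).
  { unfold K. pose proof (cond_pos_sum G N (fun k => HGpos k)). lra. }
  exists K. intros n. change (G n <= K).
  induction n as [n IH] using Wf_nat.lt_wf_ind.
  destruct (Compare_dec.le_lt_dec n N) as [Hn|Hn].
  - pose proof (HsumG n Hn). pose proof (Rabs_pos kappa). unfold K. lra.
  - destruct n as [|[|n']]; [lia | assert (N = 0%nat) by lia; subst N; simpl in HN; lra |].
    pose proof (step_bound K HK n' (fun m Hm => IH m ltac:(lia))) as HS.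
    assert (HNn : INR N <= INR (S (S n'))) by (apply le_INR; lia).
    assert (H2 : 2 <= INR (S (S n')) * (2 - exp rho)) by nra.
    assert (0 < INR (S (S n'))) by (apply lt_0_INR; lia).
    assert (0 <= K) by (pose proof (Rabs_pos kappa); lra).
    assert (INR (S (S n')) * G (S (S n')) <= INR (S (S n')) * K) by nra.
    apply Rmult_le_reg_l with (INR (S (S n'))); assumption.
Qed.

End Bound.

Lemma ln2_pos : 0 < ln 2.
Proof. rewrite <- ln_1. apply ln_increasing; lra. Qed.

Lemma ln2_lt1 : ln 2 < 1.
Proof.
  pose proof (exp_ineq1 1 ltac:(lra)).
  rewrite <- (ln_exp 1). apply ln_increasing; lra.
Qed.

Lemma radius_ge (a : nat -> R) r M : (forall n, Rabs (a n * r ^ n) <= M) -> Rbar_le r (CV_radius a).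
Proof.
  intros H. destruct (CV_radius_bounded a) as [Hub _]. apply Hub. exists M. exact H.
Qed.

Lemma Ex_radius r : 0 <= r -> Rbar_le r (CV_radius Ex).
Proof.
  intros Hr. apply radius_ge with (exp r). intros n.
  rewrite Rabs_pos_eq by (apply Rmult_le_pos; [left; apply Ex_pos | apply pow_le; lra]).
  eapply Rle_trans; [| apply (exp_partial r Hr n)].
  destruct n; [simpl; lra|]. rewrite tech5.
  assert (0 <= sum_f_R0 (fun i => Ex i * r ^ i) n).
  { apply cond_pos_sum. intros; apply Rmult_le_pos; [left; apply Ex_pos | apply pow_le; lra]. }
  lra.
Qed.

Lemma pser_series a t l : is_pseries a t l -> is_series (fun n => a n * t ^ n) l.
Proof.
  intros H. eapply is_series_ext; [|exact H].
  intros n. rewrite pow_n_pow. unfold scal; simpl. unfold mult; simpl. apply Rmult_comm.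
Qed.

Lemma Rbar_lt_le_trans' (a b : R) (c : Rbar) : a < b -> Rbar_le b c -> Rbar_lt a c.
Proof. intros H1 H2. destruct c; simpl in *; lra || auto. Qed.

Lemma is_derive_val (f : R -> R) t l l' : is_derive f t l -> l = l' -> is_derive f t l'.
Proof. intros H ->; exact H. Qed.

Section Analysis.
Variable F : nat -> R.
Variable kappa : R.
Variable Gf : R -> R.
Hypothesis HF : forall n, 2 * Dr F n - PS_mult Ex (Dr F) n = F n + kappa * Ex n.
Hypothesis HG : forall t, Rabs t < ln 2 -> is_derive Gf t (kappa / sqrt (2 * exp (- t) - 1)).
Hypothesis H0 : F 0%nat = Gf 0.

Lemma ode t (Ht : Rbar_lt (Rabs t) (CV_radius F)) :
  (2 - exp t) * PSeries (PS_derive F) t = PSeries F t + kappa * exp t.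
Proof.
  assert (HtD : Rbar_lt (Rabs t) (CV_radius (PS_derive F))) by (rewrite CV_radius_derive; exact Ht).
  assert (HtE : Rbar_lt (Rabs t) (CV_radius Ex)).
  { apply Rbar_lt_le_trans' with (Rabs t + 1); [lra|]. apply Ex_radius. pose proof (Rabs_pos t). lra. }
  pose proof (PSeries_correct _ _ (CV_radius_inside _ _ HtD)) as HD.
  pose proof (PSeries_correct _ _ (CV_radius_inside _ _ Ht)) as HP.
  pose proof (is_exp_Reals t) as HE. change (fun n => / INR (fact n)) with Ex in HE.
  pose proof (is_pseries_mult _ _ _ _ _ HE HD HtE HtD) as HM.
  apply pser_series in HD, HP, HE, HM.
  set (P' := PSeries (PS_derive F) t) in *.
  set (P := PSeries F t) in *.
  assert (H1 : is_series (fun n => (2 * Dr F n - PS_mult Ex (Dr F) n) * t ^ n) (2 * P' - exp t * P')).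
  { pose proof (is_series_scal 2 _ _ HD) as H2.
    pose proof (is_series_minus _ _ _ _ H2 HM) as H3.
    eapply is_series_ext; [| exact H3]. intros n. unfold scal, plus, opp; simpl.
    unfold mult, plus, opp; simpl. unfold Dr, PS_derive. 
    unfold PS_mult. ring. }
  assert (H2 : is_series (fun n => (F n + kappa * Ex n) * t ^ n) (P + kappa * exp t)).
  { pose proof (is_series_scal kappa _ _ HE) as H2.
    pose proof (is_series_plus _ _ _ _ HP H2) as H3.
    eapply is_series_ext; [| exact H3]. intros n. unfold scal, plus; simpl.
    unfold mult, plus; simpl. ring. }
  apply is_series_unique in H1. apply is_series_unique in H2.
  rewrite (Series_ext _ (fun n => (F n + kappa * Ex n) * t ^ n)) in H1 by (intros; rewrite HF; reflexivity).
  rewrite H1 in H2. lra.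
Qed.

Definition wf (t : R) : R := sqrt (2 * exp (- t) - 1).

Lemma wf_pos t : t < ln 2 -> 0 < 2 * exp (- t) - 1.
Proof.
  intros Ht. assert (exp t < 2) by (rewrite <- (exp_ln 2) by lra; apply exp_increasing; lra).
  rewrite exp_Ropp. assert (0 < exp t) by apply exp_pos.
  apply Rlt_Rminus. rewrite <- (Rinv_r (exp t)) by lra.
  replace (2 * / exp t) with (/ exp t * 2) by ring. rewrite (Rmult_comm (exp t)).
  apply Rmult_lt_compat_l; [apply Rinv_0_lt_compat; lra | lra].
Qed.

Lemma wf_derive t : t < ln 2 -> is_derive wf t (- exp (- t) / wf t).
Proof.
  intros Ht. pose proof (wf_pos t Ht). unfold wf. auto_derive.
  - lra.
  - assert (0 < sqrt (2 * exp (- t) - 1)) by (apply sqrt_lt_R0; lra).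
    replace (2 * exp (- t) + - (1)) with (2 * exp (- t) - 1) by ring. field. lra.
Qed.

Theorem main_series x (Hx : Rabs x < ln 2) :
  is_series (fun n => F n * x ^ n) (Gf x / sqrt (2 * exp (- x) - 1)).
Proof.
  pose proof ln2_pos. pose proof ln2_lt1. pose proof (Rabs_pos x).
  set (rho := (Rabs x + ln 2) / 2).
  assert (Hr0 : 0 < rho) by (unfold rho; lra).
  assert (Hr1 : rho < ln 2) by (unfold rho; lra).
  assert (Hexp : exp rho < 2) by (rewrite <- (exp_ln 2) by lra; apply exp_increasing; lra).
  destruct (coef_bound F kappa rho Hr0 ltac:(lra) Hexp HF) as [K HK].
  assert (Hrad : Rbar_le rho (CV_radius F)).
  { apply radius_ge with K. intros n. rewrite Rabs_mult, (Rabs_pos_eq (rho ^ n)) by (apply pow_le; lra). apply HK. }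
  assert (Hin : forall t, Rabs t <= Rabs x -> Rbar_lt (Rabs t) (CV_radius F)).
  { intros t Ht. apply Rbar_lt_le_trans' with rho; [unfold rho; lra | exact Hrad]. }
  set (V := fun t => PSeries F t * wf t - Gf t).
  assert (HV : forall t, Rabs t <= Rabs x -> is_derive V t 0).
  { intros t Ht. assert (Htl : Rabs t < ln 2) by lra.
    assert (Htl' : t < ln 2) by (pose proof (Rle_abs t); lra).
    pose proof (wf_pos t Htl') as Hw.
    assert (Hwp : 0 < wf t) by (apply sqrt_lt_R0; lra).
    assert (Hw2 : wf t * wf t = 2 * exp (- t) - 1) by (apply sqrt_sqrt; lra).
    pose proof (is_derive_PSeries F t (Hin t Ht)) as HdP.
    pose proof (is_derive_mult _ _ _ _ _ HdP (wf_derive t Htl') ltac:(intros; apply Rmult_comm)) as HM.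
    pose proof (is_derive_minus _ _ _ _ _ HM (HG t Htl)) as HD.
    unfold V. eapply is_derive_ext; [| apply (is_derive_val _ _ _ 0 HD)].
    - intros; reflexivity.
    - pose proof (ode t (Hin t Ht)) as Hode.
      unfold minus, plus, opp, mult; simpl.
      fold (wf t). 
      assert (exp t * exp (- t) = 1) by (rewrite exp_Ropp; field; apply Rgt_not_eq, exp_pos).
      set (P' := PSeries (PS_derive F) t) in *. set (P := PSeries F t) in *.
      set (W := wf t) in *. set (e := exp (- t)) in *.
      assert (Hk : (2 * e - 1) * P' = P * e + kappa).
      { replace (2 * e - 1) with ((2 - exp t) * e) by (ring_simplify; lra).
        rewrite Rmult_assoc, (Rmult_comm e), <- Rmult_assoc, Hode.
        rewrite Rmult_plus_distr_r, Rmult_assoc, H3. ring. }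
      replace (P' * W + P * (- e / W) + - (kappa / W)) with ((P' * (W * W) - P * e - kappa) / W)
        by (field; lra).
      rewrite Hw2, (Rmult_comm P'), Hk. field. lra. }
  assert (Hmm : forall y, Rmin 0 x <= y <= Rmax 0 x -> Rabs y <= Rabs x).
  { intros y Hy. unfold Rmin, Rmax in Hy. destruct (Rle_dec 0 x);
    unfold Rabs; destruct (Rcase_abs y); destruct (Rcase_abs x); lra. }
  destruct (MVT_gen V 0 x (fun _ => 0)) as [c [_ Hc]].
  { intros y Hy. apply HV, Hmm. lra. }
  { intros y Hy. apply continuity_pt_filterlim.
    assert (Hd : ex_derive V y) by (exists 0; apply HV, Hmm; exact Hy).
    exact (ex_derive_continuous V y Hd). }
  assert (HV0 : V 0 = 0).
  { unfold V, wf. rewrite PSeries_0, Ropp_0, exp_0.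
    replace (2 * 1 - 1) with 1 by ring. rewrite sqrt_1, H0. ring. }
  assert (HVx : PSeries F x * wf x = Gf x) by (unfold V in Hc, HV0; lra).
  assert (Hxl : x < ln 2) by (pose proof (Rle_abs x); lra).
  assert (Hwx : 0 < wf x) by (apply sqrt_lt_R0, wf_pos, Hxl).
  replace (Gf x / sqrt (2 * exp (- x) - 1)) with (PSeries F x).
  2: { fold (wf x). rewrite <- HVx. field. lra. }
  apply pser_series, PSeries_correct, CV_radius_inside, Hin. lra.
Qed.

End Analysis.

Lemma sum_n_m_0 (a : nat -> R) n : sum_n_m a 0 n = sum_f_R0 a n.
Proof. rewrite <- sum_n_Reals. reflexivity. Qed.

Definition alpha_b (k : nat) : R := / 4 * (-1) ^ k * INR (oddfact k).

Lemma alpha_b_rec k : alpha_b (S k) + (2 * INR k + 1) * alpha_b k = - 0 * (-1) ^ k * INR (fact k).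
Proof.
  unfold alpha_b. change (oddfact (S k)) with ((2 * k + 1) * oddfact k)%nat.
  rewrite mult_INR, plus_INR, mult_INR. simpl pow. simpl INR. ring.
Qed.

Lemma b_coef_eq n : b_coef n = Fc alpha_b n.
Proof.
  unfold b_coef, Fc, FM. rewrite sum_n_m_0, scal_sum. apply sum_eq. intros i Hi.
  unfold alpha_b, T. field. apply INR_fact_neq_0.
Qed.

Definition Gb (t : R) : R := / 4.

Theorem part_b (x : R) (hx : Rabs x < ln 2) :
  is_series (fun n => b_coef n * x ^ n) (1 / (4 * sqrt (2 * exp (- x) - 1))).
Proof.
  assert (Hs : 0 < sqrt (2 * exp (- x) - 1)).
  { apply sqrt_lt_R0, wf_pos. pose proof (Rle_abs x); lra. }
  replace (1 / (4 * sqrt (2 * exp (- x) - 1))) with (Gb x / sqrt (2 * exp (- x) - 1))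
    by (unfold Gb; field; lra).
  eapply is_series_ext; [| apply (main_series (Fc alpha_b) 0 Gb)].
  - intros n. simpl. rewrite b_coef_eq. reflexivity.
  - apply Exform. apply alpha_b_rec.
  - intros t _. unfold Gb. eapply is_derive_ext; [| apply (is_derive_val _ _ _ _ (is_derive_const (/4) t))].
    + intros; reflexivity.
    + unfold zero; simpl. unfold Rdiv. ring.
  - unfold Fc, FM, alpha_b, T, Gb. simpl. field.
  - exact hx.
Qed.

Definition qq (l : nat) : R := (-1) ^ l * Rpower 2 (INR l / 2) * sin (3 * INR l * PI / 4).
Definition pp (l : nat) : R := (-1) ^ l * Rpower 2 (INR l / 2) * cos (3 * INR l * PI / 4).

Lemma Rpower_S l : Rpower 2 (INR (S l) / 2) = Rpower 2 (INR l / 2) * sqrt 2.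
Proof.
  rewrite S_INR. replace ((INR l + 1) / 2) with (INR l / 2 + / 2) by field.
  rewrite Rpower_plus, Rpower_sqrt by lra. reflexivity.
Qed.

Lemma angle_S l : 3 * INR (S l) * PI / 4 = 3 * INR l * PI / 4 + 3 * (PI / 4).
Proof. rewrite S_INR. field. Qed.

Lemma qq_S l : qq (S l) = qq l - pp l.
Proof.
  unfold qq, pp. rewrite Rpower_S, angle_S, sin_plus, sin_3PI4, cos_3PI4.
  simpl pow. field. apply sqrt2_neq_0.
Qed.

Lemma pp_S l : pp (S l) = pp l + qq l.
Proof.
  unfold qq, pp. rewrite Rpower_S, angle_S, cos_plus, sin_3PI4, cos_3PI4.
  simpl pow. field. apply sqrt2_neq_0.
Qed.

Lemma pp_0 : pp 0 = 1.
Proof. unfold pp. simpl INR. replace (0 / 2) with 0 by field. replace (3 * 0 * PI / 4) with 0 by field.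
  rewrite Rpower_O, cos_0 by lra. ring. Qed.

Lemma qq_0 : qq 0 = 0.
Proof. unfold qq. simpl INR. replace (3 * 0 * PI / 4) with 0 by field. rewrite sin_0. ring. Qed.

Lemma qq_1 : qq 1 = -1.
Proof. rewrite qq_S, qq_0, pp_0. ring. Qed.

Lemma pp_2 : pp 2 = 0.
Proof. rewrite pp_S, pp_S, qq_S, qq_0, pp_0. ring. Qed.

Lemma pp_SSS m : pp (S (S (S m))) = 2 * qq (S m).
Proof. repeat (rewrite pp_S || rewrite qq_S). ring. Qed.

Definition beta (k m : nat) : R :=
  match k with
  | O => match m with O => 1 | _ => 0 end
  | _ => if Nat.leb m k then INR m * INR (fact (2 * k - m - 1)) / (INR (fact k) * INR (fact (k - m))) else 0
  end.

Lemma beta_formula k m : (1 <= k)%nat -> (m <= k)%nat ->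
  beta k m = INR m * INR (fact (2 * k - m - 1)) / (INR (fact k) * INR (fact (k - m))).
Proof.
  intros Hk Hm. destruct k; [lia|]. unfold beta.
  replace (Nat.leb m (S k)) with true by (symmetry; apply Nat.leb_le; lia). reflexivity.
Qed.

Lemma beta_zero k m : (k < m)%nat -> beta k m = 0.
Proof.
  intros H. destruct k; unfold beta.
  - destruct m; [lia|reflexivity].
  - replace (Nat.leb m (S k)) with false by (symmetry; apply Nat.leb_gt; lia). reflexivity.
Qed.

Lemma beta_diag k : beta k k = 1.
Proof.
  destruct k; [reflexivity|]. rewrite beta_formula by lia.
  replace (2 * S k - S k - 1)%nat with k by lia. replace (S k - S k)%nat with 0%nat by lia.
  rewrite fact_S_R. simpl (fact 0). change (INR 1) with 1. rewrite Rmult_1_r. apply Rinv_r. apply Rmult_integral_contrapositive; split; [apply not_0_INR; lia | apply INR_fact_neq_0].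
Qed.

Lemma beta_k0 k : (1 <= k)%nat -> beta k 0 = 0.
Proof. intros H. rewrite beta_formula by lia. simpl INR. field. split; apply INR_fact_neq_0. Qed.

Lemma INR_fact_pos n : 0 < INR (fact n).
Proof. apply lt_0_INR, lt_O_fact. Qed.

Lemma beta_rec k' m : beta (S k') (S (S m)) = beta (S k') (S m) - beta k' m.
Proof.
  destruct (Compare_dec.le_lt_dec (S (S m)) (S k')) as [Hle|Hgt].
  - destruct (Nat.le_exists_sub (S m) k' ltac:(lia)) as [j [Hj _]]. subst k'.
    rewrite !beta_formula by lia.
    replace (2 * S (j + S m) - S (S m) - 1)%nat with (m + 2 * j + 1)%nat by lia.
    replace (S (j + S m) - S (S m))%nat with j by lia.
    replace (2 * S (j + S m) - S m - 1)%nat with (S (m + 2 * j + 1)) by lia.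
    replace (S (j + S m) - S m)%nat with (S j) by lia.
    replace (2 * (j + S m) - m - 1)%nat with (m + 2 * j + 1)%nat by lia.
    replace (j + S m - m)%nat with (S j) by lia.
    replace (S (j + S m)) with (S (S (m + j))) by lia.
    replace (j + S m)%nat with (S (m + j)) by lia.
    rewrite !fact_S_R.
    pose proof (INR_fact_pos (m + 2 * j + 1)). pose proof (INR_fact_pos (m + j)). pose proof (INR_fact_pos j).
    rewrite !S_INR, !plus_INR, !mult_INR. simpl INR.
    pose proof (pos_INR m); pose proof (pos_INR j).
    field. repeat split; lra.
  - destruct (Nat.eq_dec m k') as [->|Hne].
    + rewrite beta_zero by lia. rewrite beta_diag, beta_diag. ring.
    + rewrite !beta_zero by lia. ring.
Qed.

Lemma sum_ext_zero (f : nat -> R) M N : (M <= N)%nat ->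
  (forall m, (M < m <= N)%nat -> f m = 0) -> sum_f_R0 f N = sum_f_R0 f M.
Proof.
  intros HMN Hz. induction N.
  - replace M with 0%nat by lia. reflexivity.
  - destruct (Nat.eq_dec M (S N)) as [->|Hne]; [reflexivity|].
    rewrite tech5, Hz by lia. rewrite IHN by (lia || (intros; apply Hz; lia)). ring.
Qed.

Lemma phi_id k' (phi : nat -> R) :
  sum_f_R0 (fun m => phi (S m) * beta (S k') m) (S (S k')) =
  phi 2%nat * beta (S k') 1 + sum_f_R0 (fun m => phi (S (S m)) * beta (S k') m) (S (S k'))
  - sum_f_R0 (fun m => phi (S (S (S m))) * beta k' m) (S (S k')).
Proof.
  rewrite sum_shift, sum_shift. rewrite beta_k0 by lia.
  rewrite (sum_eq (fun i => phi (S (S (S i))) * beta (S k') (S (S i)))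
                  (fun i => phi (S (S (S i))) * beta (S k') (S i) - phi (S (S (S i))) * beta k' i))
    by (intros; rewrite beta_rec; ring).
  rewrite minus_sum.
  rewrite (sum_shift (fun m => phi (S (S m)) * beta (S k') m)). rewrite beta_k0 by lia.
  rewrite tech5. rewrite (beta_zero (S k') (S (S k'))) by lia.
  rewrite (sum_ext_zero (fun m => phi (S (S (S m))) * beta k' m) k' (S (S k'))).
  2: lia.
  2: { intros m Hm. rewrite beta_zero by lia. ring. }
  ring.
Qed.

Definition Qs (k : nat) : R := sum_f_R0 (fun m => qq (S m) * beta k m) k.
Definition Ps (k : nat) : R := sum_f_R0 (fun m => pp (S m) * beta k m) k.

Lemma Qs_rec k' : Qs (S k') = 2 * Qs k'.
Proof.
  pose proof (phi_id k' pp) as H.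
  rewrite pp_2 in H.
  rewrite (sum_eq (fun m => pp (S (S m)) * beta (S k') m)
                  (fun m => pp (S m) * beta (S k') m + qq (S m) * beta (S k') m))
    in H by (intros; rewrite pp_S; ring).
  rewrite (sum_eq (fun m => pp (S (S (S m))) * beta k' m)
                  (fun m => (qq (S m) * beta k' m) * 2))
    in H by (intros; rewrite pp_SSS; ring).
  rewrite plus_sum, <- scal_sum in H.
  rewrite (sum_ext_zero (fun m => pp (S m) * beta (S k') m) (S k') (S (S k'))) in H
    by (lia || (intros; rewrite beta_zero by lia; ring)).
  rewrite (sum_ext_zero (fun m => qq (S m) * beta (S k') m) (S k') (S (S k'))) in H
    by (lia || (intros; rewrite beta_zero by lia; ring)).
  rewrite (sum_ext_zero (fun m => qq (S m) * beta k' m) k' (S (S k'))) in H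
    by (lia || (intros; rewrite beta_zero by lia; ring)).
  unfold Qs. rewrite (Rmult_comm 2). lra.
Qed.

Lemma Qs_val k : Qs k = - 2 ^ k.
Proof.
  induction k.
  - unfold Qs. simpl. rewrite qq_1. ring.
  - rewrite Qs_rec, IHk. simpl. ring.
Qed.

Definition inner (k : nat) : R :=
  sum_n_m (fun l => (-1) ^ l * binR (2 * k - l) k * Rpower 2 (INR l / 2) / INR l
                         * sin (3 * INR l * PI / 4)) 1 k.

Definition gk (k l : nat) : R := binR (2 * k - l) k / INR l * qq l.

Lemma sum_n_m_0' (a : nat -> R) n : sum_n_m a 0 n = sum_f_R0 a n.
Proof. rewrite <- sum_n_Reals. reflexivity. Qed.

Lemma sum_n_m_1S (a : nat -> R) k : sum_n_m a 1 (S k) = sum_f_R0 (fun m => a (S m)) k.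
Proof. rewrite <- sum_n_m_S, sum_n_m_0'. reflexivity. Qed.

Lemma inner_alt k : inner (S k) = sum_f_R0 (fun m => gk (S k) (S m)) k.
Proof.
  unfold inner. rewrite sum_n_m_1S. apply sum_eq. intros i _. unfold gk, qq. unfold Rdiv. ring.
Qed.

Lemma inner_0 : inner 0 = 0.
Proof. unfold inner. rewrite sum_n_m_zero by lia. reflexivity. Qed.

Lemma binR_diag n : binR n n = 1.
Proof.
  unfold binR, Binomial.C. rewrite Nat.sub_diag. simpl (fact 0). change (INR 1) with 1.
  rewrite Rmult_1_r. apply Rinv_r. apply INR_fact_neq_0.
Qed.

Lemma per_term m j :
  (INR (S (m + j)) + 1) * gk (S (S (m + j))) (S m) - 2 * (2 * INR (S (m + j)) + 1) * gk (S (m + j)) (S m)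
  = qq (S m) * beta (S (m + j)) m.
Proof.
  unfold gk. rewrite beta_formula by lia. unfold binR, Binomial.C.
  replace (2 * S (S (m + j)) - S m)%nat with (S (S (m + 2 * j + 1))) by lia.
  replace (S (S (m + 2 * j + 1)) - S (S (m + j)))%nat with (S j) by lia.
  replace (2 * S (m + j) - S m)%nat with (m + 2 * j + 1)%nat by lia.
  replace (m + 2 * j + 1 - S (m + j))%nat with j by lia.
  replace (2 * S (m + j) - m - 1)%nat with (m + 2 * j + 1)%nat by lia.
  replace (S (m + j) - m)%nat with (S j) by lia.
  rewrite !fact_S_R.
  pose proof (INR_fact_pos (m + 2 * j + 1)). pose proof (INR_fact_pos (m + j)). pose proof (INR_fact_pos j).
  rewrite !S_INR, !plus_INR, !mult_INR. simpl INR.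
  pose proof (pos_INR m); pose proof (pos_INR j).
  field. repeat split; lra.
Qed.

Lemma inner_rec k : (INR k + 1) * inner (S k) - 2 * (2 * INR k + 1) * inner k = - 2 ^ k.
Proof.
  rewrite <- Qs_val. destruct k as [|k'].
  - rewrite inner_0, inner_alt. unfold Qs, gk. simpl sum_f_R0.
    replace (2 * 1 - 1)%nat with 1%nat by lia. rewrite binR_diag. simpl beta. simpl INR. field.
  - rewrite !inner_alt. unfold Qs. rewrite tech5, (tech5 (fun m => qq (S m) * beta (S k') m)).
    rewrite beta_diag.
    assert (Hl : (INR (S k') + 1) * gk (S (S k')) (S (S k')) = qq (S (S k'))).
    { unfold gk. replace (2 * S (S k') - S (S k'))%nat with (S (S k')) by lia.
      rewrite binR_diag. rewrite (S_INR (S k')). field. pose proof (pos_INR (S k')). lra. }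
    assert (Hs : (INR (S k') + 1) * sum_f_R0 (fun m => gk (S (S k')) (S m)) k'
                 - 2 * (2 * INR (S k') + 1) * sum_f_R0 (fun m => gk (S k') (S m)) k'
                 = sum_f_R0 (fun m => qq (S m) * beta (S k') m) k').
    { rewrite !scal_sum.
      rewrite <- minus_sum. apply sum_eq. intros m Hm.
      destruct (Nat.le_exists_sub m k' Hm) as [j [Hj _]]. subst k'.
      replace (j + m)%nat with (m + j)%nat by lia.
      rewrite <- per_term. ring. }
    rewrite <- Hs, <- Hl. ring.
Qed.

Definition alpha_c (k : nat) : R := - (-1) ^ k * INR (fact k) / 2 ^ k * inner k.

Lemma alpha_c_rec k : alpha_c (S k) + (2 * INR k + 1) * alpha_c k = - (1/2) * (-1) ^ k * INR (fact k).
Proof.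
  unfold alpha_c. pose proof (inner_rec k) as Hr.
  assert (H2 : 2 ^ k <> 0) by (apply pow_nonzero; lra).
  rewrite fact_S_R, S_INR. simpl pow.
  replace (- (-1 * (-1) ^ k) * ((INR k + 1) * INR (fact k)) / (2 * 2 ^ k) * inner (S k))
    with ((-1) ^ k * INR (fact k) / (2 * 2 ^ k) * ((INR k + 1) * inner (S k))) by (field; auto).
  replace ((INR k + 1) * inner (S k)) with (2 * (2 * INR k + 1) * inner k - 2 ^ k) by lra.
  field. auto.
Qed.

Lemma c_coef_eq n : c_coef n = Fc alpha_c n.
Proof.
  unfold c_coef, Fc, FM.
  set (h := fun k => (-1) ^ k * INR (stirling2 n k) * INR (fact k) / 2 ^ k *
     sum_n_m (fun l => (-1) ^ l * binR (2 * k - l) k * Rpower 2 (INR l / 2) / INR l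
                         * sin (3 * INR l * PI / 4)) 1 k).
  assert (Hh : sum_n_m h 1 n = sum_f_R0 h n).
  { rewrite <- sum_n_m_0'. rewrite (sum_Sn_m h 0 n) by lia.
    replace (h 0%nat) with 0. 2: { unfold h. fold (inner 0). rewrite inner_0. ring. }
    symmetry. apply (plus_zero_l (G := R_AbelianMonoid)). }
  rewrite Hh, scal_sum. apply sum_eq. intros k _. unfold h, alpha_c, T. fold (inner k).
  assert (2 ^ k <> 0) by (apply pow_nonzero; lra).
  pose proof (INR_fact_neq_0 n).
  rewrite pow_add. field. auto.
Qed.

Definition Gc (t : R) : R := PI / 4 - atan (sqrt (2 * exp (- t) - 1)).

Theorem part_c (x : R) (hx : Rabs x < ln 2) :
  is_series (fun n => c_coef n * x ^ n)
    ((PI / 4 - atan (sqrt (2 * exp (- x) - 1))) / sqrt (2 * exp (- x) - 1)).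
Proof.
  change (PI / 4 - atan (sqrt (2 * exp (- x) - 1))) with (Gc x).
  eapply is_series_ext; [| apply (main_series (Fc alpha_c) (1/2) Gc)].
  - intros n. simpl. rewrite c_coef_eq. reflexivity.
  - apply Exform. apply alpha_c_rec.
  - intros t Ht. assert (Htl' : t < ln 2) by (pose proof (Rle_abs t); lra).
    pose proof (wf_pos t Htl') as Hw0.
    assert (Hwp : 0 < wf t) by (apply sqrt_lt_R0; lra).
    assert (Hw2 : wf t * wf t = 2 * exp (- t) - 1) by (apply sqrt_sqrt; lra).
    pose proof (wf_derive t Htl') as Hw.
    assert (Ha : is_derive atan (wf t) (/ (1 + (wf t) ^ 2))) by (apply is_derive_Reals, derivable_pt_lim_atan).
    pose proof (is_derive_comp _ _ _ _ _ Ha Hw) as Hc.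
    pose proof (is_derive_minus _ _ _ _ _ (is_derive_const (PI / 4) t) Hc) as Hd.
    eapply is_derive_ext; [| apply (is_derive_val _ _ _ _ Hd)].
    + intros; unfold Gc, wf, minus, plus, opp; simpl. reflexivity.
    + fold (wf t). unfold minus, plus, opp, zero, scal; simpl. unfold mult; simpl.
      assert (0 < exp (- t)) by apply exp_pos.
      assert (Hv : 0 + - (- exp (- t) / wf t * / (1 + wf t * (wf t * 1))) = 1 / 2 / wf t :> R).
      { rewrite Rmult_1_r, Hw2. field. lra. }
      exact Hv.
  - unfold Fc, FM, alpha_c, Gc. simpl sum_f_R0. rewrite inner_0, Ropp_0, exp_0.
    replace (2 * 1 - 1) with 1 by ring. rewrite sqrt_1, atan_1. ring.
  - exact hx.
Qed.

Theorem theorem6p1 (x : R) (hx : Rabs x < ln 2) :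
  is_series (fun n => b_coef n * x ^ n) (1 / (4 * sqrt (2 * exp (- x) - 1))) /\
  is_series (fun n => c_coef n * x ^ n)
    ((PI / 4 - atan (sqrt (2 * exp (- x) - 1))) / sqrt (2 * exp (- x) - 1)).
Proof. split; [apply part_b | apply part_c]; exact hx. Qed.
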